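(* Let $T$ be a tournament and let $\sigma$ be any ordering of $V(T)$ in which the vertices appear in non-decreasing order of in-degree. Then $\Delta_\sigma(T)\le 3\,\Delta(T)$. Moreover, the factor $3$ is tight: there exist a tournament $T$ with $\Delta(T)\ge 1$ and an ordering $\sigma$ of $V(T)$ in non-decreasing order of in-degree with $\Delta_\sigma(T)=3\,\Delta(T)$.
   Context: A tournament is a digraph with exactly one arc between each pair of distinct vertices; $d^-(v)$ is the in-degree of $v$. For an ordering $\sigma=\langle v_1,\dots,v_n\rangle$ of $V(T)$, an arc $(v_i,v_j)$ is backward if $j<i$. $d_\sigma(v)$ is the number of backward arcs incident to $v$, $\Delta_\sigma(T)=\max_v d_\sigma(v)$, and the degreewidth is $\Delta(T)=\min_\sigma\Delta_\sigma(T)$ over all orderings $\sigma$. *)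

(* Defs.v *)
From mathcomp Require Import all_boot all_fingroup.
Set Implicit Arguments. Unset Strict Implicit. Unset Printing Implicit Defensive.

Definition tournament n (arc : rel 'I_n) : Prop :=
  (forall v, ~~ arc v v) /\
  (forall u v, u != v -> arc u v (+) arc v u).

Definition indeg n (arc : rel 'I_n) (v : 'I_n) : nat := #|[set u | arc u v]|.

(* An ordering sigma of V(T) is a permutation p : position of v is p v. *)
Definition backward n (arc : rel 'I_n) (p : {perm 'I_n}) (u w : 'I_n) : bool :=
  arc u w && (p w < p u).

Definition dsig n (arc : rel 'I_n) (p : {perm 'I_n}) (v : 'I_n) : nat :=
  #|[set u | backward arc p u v || backward arc p v u]|.

Definition Deltasig n (arc : rel 'I_n) (p : {perm 'I_n}) : nat :=
  \max_(v : 'I_n) dsig arc p v.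

Definition degreewidth n (arc : rel 'I_n) : nat :=
  Deltasig arc [arg min_(p < (1%g : {perm 'I_n})) Deltasig arc p].

Definition indeg_sorted n (arc : rel 'I_n) (p : {perm 'I_n}) : Prop :=
  forall u v : 'I_n, p u < p v -> indeg arc u <= indeg arc v.

(* Main.v *)
Require Import Defs.
From mathcomp Require Import all_boot all_fingroup zify.
Set Implicit Arguments. Unset Strict Implicit.

Lemma card_lt n m : #|[set i : 'I_n | i < m]| = minn m n.
Proof.
elim: m => [|m IH].
  rewrite (_ : [set _ | _] = set0) ?cards0; first by rewrite min0n.
  by apply/setP=> i; rewrite !inE.
case: (ltnP m n) => hm.
  rewrite (_ : [set _ | _] = Ordinal hm |: [set i : 'I_n | i < m]).
    rewrite cardsU1 IH !inE ltnn /=. lia.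
  by apply/setP=> i; rewrite !inE ltnS leq_eqVlt -val_eqE.
rewrite (_ : [set _ | _] = [set i : 'I_n | i < m]).
  rewrite IH. lia.
apply/setP=> i; rewrite !inE. have := ltn_ord i. lia.
Qed.

Lemma cardU3 (T : finType) (A B : {set T}) : #|A :|: B| <= #|A| + #|B|.
Proof. rewrite cardsU. lia. Qed.

Lemma sub_card2 (T : finType) (S A B : {set T}) :
  (forall x, x \in S -> (x \in A) || (x \in B)) -> #|S| <= #|A| + #|B|.
Proof.
move=> H; apply: leq_trans (cardU3 A B).
by apply: subset_leq_card; apply/subsetP=> x /H; rewrite inE.
Qed.

Lemma arc_neq n (arc : rel 'I_n) u v : tournament arc -> arc u v -> u != v.
Proof. by case=> irr _ huv; apply/eqP=> e; move: huv; rewrite e (negbTE (irr v)). Qed.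

Lemma arc_tot n (arc : rel 'I_n) u v : tournament arc -> u != v -> ~~ arc u v -> arc v u.
Proof. by case=> _ H /H; case: (arc u v); case: (arc v u). Qed.

Lemma perm_neq n (t : {perm 'I_n}) u v : u != v -> (t u : nat) != t v.
Proof. by move=> h; apply: contra h => /eqP/val_inj/perm_inj ->. Qed.

Lemma ind_lo n (arc : rel 'I_n) (t : {perm 'I_n}) w : tournament arc ->
  t w <= indeg arc w + dsig arc t w.
Proof.
move=> T.
have -> : (t w : nat) = #|t @^-1: [set i : 'I_n | i < t w]|.
  rewrite card_preimset ?card_lt; last exact: perm_inj. have := ltn_ord (t w). lia.
apply: sub_card2 => u; rewrite !inE => h.
case a: (arc u w) => //=.
have uw : u != w by apply: contraTneq h => ->; rewrite ltnn.
by rewrite /backward (arc_tot T uw (negbT a)) //= h orbT.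
Qed.

Lemma ind_hi n (arc : rel 'I_n) (t : {perm 'I_n}) w : tournament arc ->
  indeg arc w <= t w + dsig arc t w.
Proof.
move=> T.
have -> : (t w : nat) = #|t @^-1: [set i : 'I_n | i < t w]|.
  rewrite card_preimset ?card_lt; last exact: perm_inj. have := ltn_ord (t w). lia.
apply: sub_card2 => u; rewrite !inE => h.
have := perm_neq t (arc_neq T h).
case: ltngtP => //= hh _.
by rewrite /backward h hh.
Qed.

Lemma dsig_le n (arc : rel 'I_n) t v : dsig arc t v <= Deltasig arc t.
Proof. rewrite /Deltasig; exact: (leq_bigmax v). Qed.

Lemma dw_min n (arc : rel 'I_n) q : degreewidth arc <= Deltasig arc q.
Proof. by rewrite /degreewidth; case: arg_minnP => // t _; apply. Qed.

Lemma part1 (n : nat) (arc : rel 'I_n) (p : {perm 'I_n}) :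
  tournament arc -> indeg_sorted arc p -> Deltasig arc p <= 3 * degreewidth arc.
Proof.
move=> T S.
set t := [arg min_(q < (1%g : {perm 'I_n})) Deltasig arc q].
have kdef : degreewidth arc = Deltasig arc t by [].
set k := degreewidth arc.
have dk : forall w, dsig arc t w <= k by move=> w; exact: dsig_le.
apply/bigmax_leqP => v _.
set a := (t v : nat). set D := indeg arc v.
have h1 := ind_lo t v T. have h2 := ind_hi t v T. have h3 := dk v.
pose S1 := t @^-1: [set i : 'I_n | a < i < (D + k).+1].
pose S2 := t @^-1: [set i : 'I_n | D - k <= i < a].
pose Bt := [set u | backward arc t u v || backward arc t v u].
have c1 : #|S1| <= D + k - a.
  rewrite card_preimset; last exact: perm_inj.
  have -> : [set i : 'I_n | a < i < (D + k).+1] =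
     [set i : 'I_n | i < (D + k).+1] :\: [set i : 'I_n | i < a.+1].
    by apply/setP=> i; rewrite !inE -leqNgt.
  rewrite cardsD (_ : _ :&: _ = [set i : 'I_n | i < minn a.+1 (D+k).+1]).
    rewrite !card_lt. lia.
  by apply/setP=> i; rewrite !inE leq_min andbC.
have c2 : #|S2| <= a - (D - k).
  rewrite card_preimset; last exact: perm_inj.
  have -> : [set i : 'I_n | D - k <= i < a] =
     [set i : 'I_n | i < a] :\: [set i : 'I_n | i < D - k].
    by apply/setP=> i; rewrite !inE -leqNgt andbC.
  rewrite cardsD (_ : _ :&: _ = [set i : 'I_n | i < minn (D - k) a]).
    rewrite !card_lt. lia.
  by apply/setP=> i; rewrite !inE leq_min andbC.
have sub : forall u, u \in [set u | backward arc p u v || backward arc p v u] ->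
   (u \in Bt) || (u \in S1 :|: S2).
  move=> u; rewrite !inE /backward.
  case/orP=> /andP [au pu].
  - have uv := arc_neq T au.
    have Ds : D <= indeg arc u by apply: S.
    have hi := ind_hi t u T. have dku := dk u. have ne := perm_neq t uv.
    rewrite au /=. case: (ltngtP (t u) (t v)) ne => hh ne //=.
    apply/orP; right; apply/andP; split; last done. lia.
  - have uv := arc_neq T au.
    have Ds : indeg arc u <= D by apply: S.
    have hi := ind_lo t u T. have dku := dk u. have ne := perm_neq t uv.
    rewrite au /=. case: (ltngtP (t v) (t u)) ne => hh ne //=.
    + apply/orP; right; apply/orP; left. lia.
    + by rewrite orbT.
have := sub_card2 sub.
have := cardU3 S1 S2.
rewrite -/(dsig arc p v) -/(dsig arc t v); move: h1 h2 h3 c1 c2; rewrite /a /D; clearbody k S1 S2; clear; move: (dsig arc p v) (dsig arc t v) (indeg arc v) (nat_of_ord (t v)) (#|S1|) (#|S2|) (#|S1 :|: S2|) => x1 x2 x3 x4 x5 x6 x7; move: k => k. lia.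
Qed.
Lemma back_pos n (arc : rel 'I_n) (p : {perm 'I_n}) x y : arc x y -> p y < p x -> 0 < Deltasig arc p.
Proof.
move=> a h; apply: leq_trans (dsig_le arc p y).
by apply/card_gt0P; exists x; rewrite inE /backward a h.
Qed.

Lemma cyc_pos n (arc : rel 'I_n) (p : {perm 'I_n}) a b c : tournament arc ->
  arc a b -> arc b c -> arc c a -> 0 < Deltasig arc p.
Proof.
move=> T ab bc ca.
have := perm_neq p (arc_neq T ab); case: (ltngtP (p a) (p b)) => // h1 _; last exact: back_pos ab h1.
have := perm_neq p (arc_neq T bc); case: (ltngtP (p b) (p c)) => // h2 _; last exact: back_pos bc h2.
by apply: (back_pos ca); apply: ltn_trans h1 h2.
Qed.

Definition gtab := [:: 0; 2; 3; 1; 4].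
Definition arcO (i j : nat) : bool :=
  ((i < j) && ~~ (((i == 0) && (j == 3)) || ((i == 1) && (j == 4))))
  || ((i == 3) && (j == 0)) || ((i == 4) && (j == 1)).
Definition arcN : rel 'I_5 := fun u v => arcO (nth 0 gtab u) (nth 0 gtab v).
Definition gf (v : 'I_5) : 'I_5 := inord (nth 0 gtab v).
Lemma gfE v : (gf v : nat) = nth 0 gtab v.
Proof. by rewrite /gf inordK //; case: v => [[|[|[|[|[|i]]]]] Hi]. Qed.
Lemma gf_inj : injective gf.
Proof.
move=> u v /(congr1 (@nat_of_ord 5)); rewrite !gfE => h; apply: val_inj; move: h.
by case: u => [[|[|[|[|[|u]]]]] Hu] //; case: v => [[|[|[|[|[|v]]]]] Hv].
Qed.
Definition tau : {perm 'I_5} := perm gf_inj.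

Lemma card5 (P : pred 'I_5) : #|[set u | P u]| = \sum_(i < 5) P i.
Proof.
rewrite -sum1_card big_mkcond /=; apply: eq_bigr => i _; rewrite inE; by case: (P i).
Qed.

Lemma arcN_T : tournament arcN.
Proof.
split.
  by case => [[|[|[|[|[|i]]]]] Hi].
by case => [[|[|[|[|[|u]]]]] Hu] //; case => [[|[|[|[|[|v]]]]] Hv].
Qed.

Definition indtab := [:: 1; 2; 2; 2; 3].
Lemma indegE v : indeg arcN v = nth 0 indtab v.
Proof.
rewrite /indeg card5 !big_ord_recl big_ord0.
by case: v => [[|[|[|[|[|i]]]]] Hi].
Qed.

Lemma sorted1 : indeg_sorted arcN 1.
Proof.
move=> u v; rewrite !perm1 !indegE.
by case: u => [[|[|[|[|[|u]]]]] Hu] //; case: v => [[|[|[|[|[|v]]]]] Hv].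
Qed.

Definition v3 : 'I_5 := @Ordinal 5 3 isT.

Lemma dsig1 : 3 <= Deltasig arcN 1.
Proof.
apply: leq_trans (dsig_le arcN 1 v3).
rewrite /dsig (eq_card (B := [set u | arcN u v3 && (v3 < u) || arcN v3 u && (u < v3)])).
  by rewrite card5 !big_ord_recl big_ord0.
by move=> u; rewrite !inE /backward !perm1.
Qed.

Lemma dsigtau : Deltasig arcN tau <= 1.
Proof.
apply/bigmax_leqP => v _.
rewrite /dsig (eq_card (B := [set u | arcN u v && (nth 0 gtab v < nth 0 gtab u)
       || arcN v u && (nth 0 gtab u < nth 0 gtab v)])).
  rewrite card5 !big_ord_recl big_ord0.
  by case: v => [[|[|[|[|[|i]]]]] Hi].
by move=> u; rewrite !inE /backward !permE !gfE.
Qed.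

Definition c0 : 'I_5 := @Ordinal 5 0 isT.
Definition c2 : 'I_5 := @Ordinal 5 2 isT.

Theorem mainTheorem3 :
  (forall (n : nat) (arc : rel 'I_n) (p : {perm 'I_n}),
      tournament arc -> indeg_sorted arc p ->
      Deltasig arc p <= 3 * degreewidth arc)
  /\
  (exists (n : nat) (arc : rel 'I_n) (p : {perm 'I_n}),
      [/\ tournament arc, 1 <= degreewidth arc, indeg_sorted arc p &
          Deltasig arc p = 3 * degreewidth arc]).
Proof.
split; first exact: part1.
have dw1 : degreewidth arcN = 1.
  apply/eqP; rewrite eqn_leq; apply/andP; split.
    exact: leq_trans (dw_min arcN tau) dsigtau.
  by apply: (@cyc_pos 5 arcN _ c0 v3 c2 arcN_T).
exists 5, arcN, (1%g : {perm 'I_5}); split.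
- exact: arcN_T.
- by rewrite dw1.
- exact: sorted1.
- have := part1 arcN_T sorted1; rewrite dw1 muln1 => h.
  by apply/eqP; rewrite eqn_leq h dsig1.
Qed.
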